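(* Let $G$ be a complete geometric graph and $B$ a subgraph of $G$. Suppose there exist two vertices $a,b\in V(G)$ and a line $l$ such that (1) $[a,b]\notin E(B)$, and (2) $a$ and all neighbors of $b$ in $B$ lie in one open side $l^{+}$ of $l$, while $b$ and all neighbors of $a$ in $B$ lie in the other open side $l^{-}$ of $l$. Then $B$ is not a blocker for $\mathcal{T}_{\leq 3}(G)$.
   Context: A geometric graph is a graph whose vertices are points in the plane in general position (no three collinear) and whose edges are straight segments between pairs of vertices; $G$ is complete if all pairs of vertices are joined. $[a,b]$ denotes the edge (segment) joining $a$ and $b$. $\mathcal{T}_{\leq k}(G)$ denotes the family of all simple (non-crossing) spanning trees of $G$ of (graph) diameter at most $k$. A subgraph $B$ blocks a family $\mathcal{F}$ of subgraphs if it shares at least one edge with every member of $\mathcal{F}$; a blocker of $\mathcal{F}$ is a subgraph that blocks $\mathcal{F}$ and has the smallest possible number of edges among all subgraphs blocking $\mathcal{F}$. *)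

(* Defs.v *)
From mathcomp Require Import all_boot all_order all_algebra.
Set Implicit Arguments. Unset Strict Implicit. Unset Printing Implicit Defensive.
Import Order.TTheory GRing.Theory Num.Theory.
Local Open Scope ring_scope.

Section GeomGraph.
Variables (R : realFieldType) (T : finType) (pos : T -> R * R).

Definition orient (p q r : R * R) : R :=
  (q.1 - p.1) * (r.2 - p.2) - (q.2 - p.2) * (r.1 - p.1).

Definition general_position : Prop :=
  injective pos /\
  forall x y z : T, x != y -> y != z -> x != z -> orient (pos x) (pos y) (pos z) != 0.

(* an edge of the complete graph on T is a 2-element subset of T *)
Definition is_edge (e : {set T}) : bool := #|e| == 2%N.

Definition subgraph_edges (E : {set {set T}}) : Prop := forall e, e \in E -> is_edge e.

Definition on_segment (p q z : R * R) : Prop :=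
  exists t : R, 0 <= t <= 1 /\ z = ((1 - t) * p.1 + t * q.1, (1 - t) * p.2 + t * q.2).

Definition on_edge (e : {set T}) (z : R * R) : Prop :=
  exists x y : T, e = [set x; y] /\ on_segment (pos x) (pos y) z.

(* simple (non-crossing): two distinct edges meet only at common endpoints *)
Definition noncrossing (E : {set {set T}}) : Prop :=
  forall e f, e \in E -> f \in E -> e != f ->
    forall z, on_edge e z -> on_edge f z ->
      exists v, [/\ v \in e, v \in f & z = pos v].

Definition adj (E : {set {set T}}) : rel T := fun u v => [set u; v] \in E.

Definition within (E : {set {set T}}) (k : nat) (u v : T) : Prop :=
  exists s : seq T, [/\ (size s <= k)%N, path (adj E) u s & last u s = v].

Definition connected_graph (E : {set {set T}}) : Prop :=
  forall u v : T, exists k, within E k u v.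

Definition acyclic (E : {set {set T}}) : Prop :=
  forall s : seq T, uniq s -> (3 <= size s)%N -> ~ cycle (adj E) s.

Definition spanning_tree (E : {set {set T}}) : Prop :=
  [/\ subgraph_edges E, connected_graph E & acyclic E].

Definition diam_le (E : {set {set T}}) (k : nat) : Prop :=
  forall u v : T, within E k u v.

(* the family T_{<= k}(G) of simple spanning trees of diameter at most k *)
Definition simple_trees_diam_le (k : nat) (E : {set {set T}}) : Prop :=
  [/\ spanning_tree E, noncrossing E & diam_le E k].

Definition blocks (F : {set {set T}} -> Prop) (B : {set {set T}}) : Prop :=
  forall E, F E -> exists e, e \in B :&: E.

Definition blocker (F : {set {set T}} -> Prop) (B : {set {set T}}) : Prop :=
  [/\ subgraph_edges B, blocks F B &
      forall B', subgraph_edges B' -> blocks F B' -> (#|B| <= #|B'|)%N].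

End GeomGraph.

(* Main.v *)
Require Import Defs.
From mathcomp Require Import all_boot all_order all_algebra.
From mathcomp Require Import ring lra.
Import Order.TTheory GRing.Theory Num.Theory.
Local Open Scope ring_scope.
Set Implicit Arguments. Unset Strict Implicit.

Lemma seg_swap (R : realFieldType) (p q z : R  *  R) : on_segment p q z -> on_segment q p z.
Proof.
case=> t [/andP [t0 t1] ->]; exists (1 - t); split.
  apply/andP; split; lra.
congr pair; ring.
Qed.

Lemma seg_common (R : realFieldType) (h x y z : R  *  R) :
  orient h x y != 0 -> on_segment h x z -> on_segment h y z -> z = h.
Proof.
case: h => h1 h2; case: x => x1 x2; case: y => y1 y2.
move=> hor [t [_ ez]] [s [_ ez']].
move: ez'; rewrite ez /=; case => E1 E2.
have e1 : t  *  (x1 - h1) = s  *  (y1 - h1).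
  have -> : t  *  (x1 - h1) = ((1 - t)  *  h1 + t  *  x1) - h1 by ring.
  rewrite E1; ring.
have e2 : t  *  (x2 - h2) = s  *  (y2 - h2).
  have -> : t  *  (x2 - h2) = ((1 - t)  *  h2 + t  *  x2) - h2 by ring.
  rewrite E2; ring.
have : t  *  orient (h1, h2) (x1, x2) (y1, y2) = 0.
  rewrite /orient /=.
  have -> : t  *  ((x1 - h1)  *  (y2 - h2) - (x2 - h2)  *  (y1 - h1)) =
     (t  *  (x1 - h1))  *  (y2 - h2) - (t  *  (x2 - h2))  *  (y1 - h1) by ring.
  rewrite e1 e2; ring.
move/eqP; rewrite mulf_eq0 (negbTE hor) orbF => /eqP ->.
congr pair; ring.
Qed.

Lemma edge_seg (R : realFieldType) (T : finType) (pos : T -> R  *  R) (p q : T) z :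
  p != q -> on_edge pos [set p; q] z -> on_segment (pos p) (pos q) z.
Proof.
move=> npq [x [y [exy hs]]].
have hx : x \in [set p; q] by rewrite exy set21.
have hy : y \in [set p; q] by rewrite exy set22.
have hp : p \in [set x; y] by rewrite -exy set21.
have hq : q \in [set x; y] by rewrite -exy set22.
case/set2P: hx => ?; subst x; case/set2P: hy => ?; subst y => //.
- by move: hq npq; rewrite !inE orbb eq_sym => ->.
- exact: seg_swap.
- by move: hp npq; rewrite !inE orbb => ->.
Qed.

Lemma aff (R : realFieldType) (c1 c2 c0 : R) p q z : on_segment p q z ->
  exists t, 0 <= t <= 1 /\ c1 * z.1+c2 * z.2+c0 = (1-t) * (c1 * p.1+c2 * p.2+c0) + t * (c1 * q.1+c2 * q.2+c0).
Proof.
case=> t [ht ->]; exists t; split => //=; ring.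
Qed.

Lemma aff_ge0 (R : realFieldType) (c1 c2 c0 : R) p q z : on_segment p q z ->
  0 <= c1 * p.1+c2 * p.2+c0 -> 0 <= c1 * q.1+c2 * q.2+c0 -> 0 <= c1 * z.1+c2 * z.2+c0.
Proof.
case/(@aff _ c1 c2 c0 p q z) => t [/andP [t0 t1] ->]; nra.
Qed.

Lemma lt0_comb (R : realFieldType) (t A B : R) : 0 <= t -> t <= 1 -> A < 0 -> B < 0 ->
  (1 - t) * A + t * B < 0.
Proof.
move=> t0 t1 hA hB.
case: (lerP A B) => hAB.
  have : (1 - t) * (B - A) >= 0 by apply: mulr_ge0; lra.
  lra.
have : t * (A - B) >= 0 by apply: mulr_ge0; lra.
lra.
Qed.

Lemma aff_lt0 (R : realFieldType) (c1 c2 c0 : R) p q z : on_segment p q z ->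
  c1 * p.1 + c2 * p.2 + c0 < 0 -> c1 * q.1 + c2 * q.2 + c0 < 0 -> c1 * z.1 + c2 * z.2 + c0 < 0.
Proof.
case/(@aff _ c1 c2 c0 p q z) => t [/andP [t0 t1] ->] hA hB.
exact: lt0_comb.
Qed.
Lemma within_refl (T : finType) (E : {set {set T}}) k u : within E k u u.
Proof. by exists [::]. Qed.

Lemma within_one (T : finType) (E : {set {set T}}) u v : u = v \/ adj E u v -> within E 1 u v.
Proof.
case=> [->|h]; first exact: within_refl.
by exists [:: v]; rewrite /= h.
Qed.

Lemma within_trans (T : finType) (E : {set {set T}}) k1 k2 u w v :
  within E k1 u w -> within E k2 w v -> within E (k1 + k2) u v.
Proof.
case=> s1 [h1 p1 l1] [s2 [h2 p2 l2]].
exists (s1 ++ s2); rewrite size_cat cat_path last_cat l1 p1 p2 l2; split => //.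
exact: leq_add.
Qed.

Lemma adjC (T : finType) (E : {set {set T}}) u v : adj E u v = adj E v u.
Proof. by rewrite /adj setUC. Qed.

Theorem mainTheorem7 (R : realFieldType) (T : finType) (pos : T -> R * R)
  (B : {set {set T}}) (a b : T) (c1 c2 c0 : R) :
  general_position pos ->
  subgraph_edges B ->
  (c1, c2) != (0, 0) ->
  [set a; b] \notin B ->
  0 < c1 * (pos a).1 + c2 * (pos a).2 + c0 ->
  (forall v, [set b; v] \in B -> 0 < c1 * (pos v).1 + c2 * (pos v).2 + c0) ->
  c1 * (pos b).1 + c2 * (pos b).2 + c0 < 0 ->
  (forall v, [set a; v] \in B -> c1 * (pos v).1 + c2 * (pos v).2 + c0 < 0) ->
  ~ blocker (simple_trees_diam_le pos 3) B.
Proof.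
move=> [_ gp] _ _ nabB Ha HbB Hb HaB [_ blk _].
set f := fun v => c1 * (pos v).1 + c2 * (pos v).2 + c0.
have hab : a != b.
  by apply/eqP => eab; move: Ha; rewrite eab => /(lt_trans Hb); rewrite ltxx.
pose c v := if v == b then a else if 0 <= f v then a else b.
have cvne : forall v, v != a -> c v != v.
  move=> v va; rewrite /c; case: ifP => [/eqP ->|vb]; first by [].
  case: ifP => _; [by rewrite eq_sym | by rewrite eq_sym vb].
have cab : forall v, c v = a \/ c v = b.
  by move=> v; rewrite /c; case: ifP => _; [left|case: ifP => _; [left|right]].
have cb : c b = a by rewrite /c eqxx.
have ca_f : forall v, v != b -> c v = a -> 0 <= f v.
  move=> v vb; rewrite /c (negbTE vb); case: ifP => // _ /eqP.
  by rewrite eq_sym (negbTE hab).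
have cb_f : forall v, c v = b -> f v < 0 /\ v != b.
  move=> v; rewrite /c; case: eqP => [_ /eqP|/eqP vb].
    by rewrite (negbTE hab).
  by case: ifP => [_ /eqP|]; [rewrite (negbTE hab) | rewrite ltNge => -> ].
pose E := [set [set c v; v] | v in [set v | v != a]].
have inE_ : forall v, v != a -> [set c v; v] \in E.
  by move=> v va; apply/imsetP; exists v; rewrite ?inE.
have Ein : forall e, e \in E -> exists2 v, v != a & e = [set c v; v].
  by move=> e /imsetP [v]; rewrite inE => va ->; exists v.
have adjc : forall v, v != a -> adj E v (c v).
  by move=> v va; rewrite /adj setUC inE_.
have cab_ne : forall v, c v != v -> (c v != a) || (c v != b) -> True by [].
have leaf : forall x w, x != a -> x != b -> adj E x w -> w = c x.
  move=> x w xa xb /Ein [v va exw].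
  have : x \in [set c v; v] by rewrite -exw set21.
  case/set2P => xv.
    by case: (cab v) => cv; move: xa xb; rewrite xv cv eqxx.
  subst x.
  have : w \in [set c v; v] by rewrite -exw set22.
  case/set2P => // wv; subst w.
  have : c v \in [set v; v] by rewrite exw set21.
  by rewrite !inE orbb (negbTE (cvne v va)).
have EB : forall v, v != a -> [set c v; v] \notin B.
  move=> v va; case: (eqVneq v b) => [->|vb]; first by rewrite cb.
  case: (cab v) => cv.
    rewrite cv; apply/negP => /HaB; rewrite ltNge.
    by have := ca_f v vb cv; rewrite /f => ->.
  rewrite cv; apply/negP => /HbB; rewrite ltNge.
  by have [] := cb_f v cv; rewrite /f => /ltW -> .
suff HE : simple_trees_diam_le pos 3 E.
  have [e] := blk E HE; rewrite inE => /andP [eB /Ein [v va ev]].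
  by move: eB; rewrite ev (negbTE (EB v va)).
have diam : diam_le E 3.
  move=> u v.
  pose hb w := if w == a then a else c w.
  have hb1 : forall w, w = hb w \/ adj E w (hb w).
    move=> w; rewrite /hb; case: eqP => [->|/eqP wa]; [by left | right; exact: adjc].
  have hb2 : forall w, hb w = a \/ hb w = b.
    by move=> w; rewrite /hb; case: ifP => _; [left | exact: cab].
  have adjab : adj E a b by rewrite -cb adjC adjc // eq_sym.
  have mid : hb u = hb v \/ adj E (hb u) (hb v).
    case: (hb2 u) => ->; case: (hb2 v) => ->; auto.
    by right; rewrite adjC.
  have w1 : within E 1 u (hb u) by exact: within_one.
  have w2 : within E 1 (hb u) (hb v) by exact: within_one.
  have w3 : within E 1 (hb v) v.
    by apply: within_one; case: (hb1 v) => h; [left | right; rewrite adjC].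
  exact: (within_trans (within_trans w1 w2) w3).
split; last first; first exact: diam.
-
  have mixed : forall z x y, x != a -> y != a -> c x = a -> c y = b ->
      on_segment (pos (c x)) (pos x) z -> on_segment (pos (c y)) (pos y) z ->
      exists v, [/\ v \in [set c x; x], v \in [set c y; y] & z = pos v].
    move=> z x y xa ya cx cy sx sy.
    have [fy yb] := cb_f y cy.
    case: (eqVneq x b) => [xb|xb].
      subst x; exists b; rewrite set22 cy set21; split => //.
      apply: (seg_common (x := pos a) (y := pos y)); last by rewrite -cy.
        apply: gp => //; [by rewrite eq_sym | by rewrite eq_sym].
      by apply: seg_swap; rewrite -cx.
    have fx := ca_f x xb cx.
    have h1 : 0 <= f a by exact: ltW.
    have z1 := aff_ge0 (c1 := c1) (c2 := c2) (c0 := c0) (p := pos a) (q := pos x).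
    rewrite cx in sx; have := z1 _ sx h1 fx.
    rewrite cy in sy; have := aff_lt0 (c1 := c1) (c2 := c2) (c0 := c0) sy Hb fy.
    by move=> /lt_le_trans H /H; rewrite ltxx.
  move=> e g /Ein [x xa ->] /Ein [y ya ->] neg z.
  move=> /(edge_seg (cvne x xa)) sx /(edge_seg (cvne y ya)) sy.
  have xy : x != y by apply: contraNneq neg => ->.
  case: (eqVneq (c x) (c y)) => [cxy|cxy].
    exists (c x); rewrite set21 cxy set21; split => //.
    have o : orient (pos (c y)) (pos x) (pos y) != 0.
      by apply: gp => //; [rewrite -cxy cvne | rewrite cvne].
    have sx' : on_segment (pos (c y)) (pos x) z by rewrite -cxy.
    exact: (seg_common o sx' sy).
  case: (cab x) => cx; case: (cab y) => cy.
  + by move: cxy; rewrite cx cy eqxx.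
  + exact: mixed.
  + have [v [h1 h2 h3]] := mixed z y x ya xa cy cx sy sx.
    by exists v.
  + by move: cxy; rewrite cx cy eqxx.
split.
- move=> e /Ein [v va ->]; rewrite /is_edge cards2 eq_sym.
  by rewrite cvne.
- by move=> u v; exists 3.
- move=> s us hs hc.
  have [x xs xab] : exists2 x, x \in s & (x != a) && (x != b).
    apply/hasP; apply/negPn/negP => /hasPn H.
    have : (size s <= size [:: a; b])%N.
      apply: uniq_leq_size => // w /H; rewrite !inE negb_and !negbK.
      by case/orP => ->; rewrite ?orbT.
    by rewrite leqNgt /= (leq_trans _ hs).
  case/andP: xab => xa xb.
  case: (rot_to xs) => i s' es.
  have cyc : cycle (adj E) (x :: s') by rewrite -es rot_cycle.
  have un : uniq (x :: s') by rewrite -es rot_uniq.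
  have sz : size (x :: s') = size s by rewrite -es size_rot.
  move: es sz cyc un.
  case: s' => [|y1 s'] es sz cyc un; first by move: hs; rewrite -sz.
  case/lastP: s' es sz cyc un => [|t yk] es sz cyc un; first by move: hs; rewrite -sz.
  move: cyc un; rewrite /= rcons_path last_rcons => /and3P [a1 _ ak] /and3P [_ ne1 _].
  move: ne1; rewrite (leaf x y1 xa xb a1) (leaf x yk xa xb) ?mem_rcons ?mem_head //.
  by rewrite adjC.
Qed.
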